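(* For $n\ge2$, with $\widetilde Q_n$, $\lambda_\pm$, the double suspension $\Sigma^2$ and $\iota\colon\Sigma^2\widetilde Q_n\to\widetilde Q_{n+1}$ as in the context, the homomorphism $\iota_*\circ\Sigma^2\colon\pi_{2n-1}(\widetilde Q_n)\to\pi_{2n+1}(\widetilde Q_{n+1})$ maps $\lambda_+\mapsto\lambda_+$ and $\lambda_-\mapsto\lambda_-$.
   Context: $\widetilde Q_n=\{(a,b)\in\mathbb R^{2n}\oplus\mathbb R^{2n}: |a|=|b|=1,\ \langle a,b\rangle=0\}$ (simply connected). For a subspace $S\subset V$ of a real vector space, $\Sigma^2S=\{(\sqrt{1-|X|^2}\,v,X): v\in S, X\in\mathbb R^2, |X|\le1\}\subset V\oplus\mathbb R^2$; in particular $\Sigma^2S^{2n-1}=S^{2n+1}\subset\mathbb R^{2n+2}$, and for $f\colon S^{2n-1}\to S$ one sets $\Sigma^2f(\sqrt{1-|X|^2}u,X)=(\sqrt{1-|X|^2}f(u),X)$, defining $\Sigma^2\colon\pi_{2n-1}(S)\to\pi_{2n+1}(\Sigma^2S)$. Let $j_+$ be the orientation-compatible orthogonal complex structure on $\mathbb R^2$, and define $\iota\colon\Sigma^2\widetilde Q_n\to\widetilde Q_{n+1}$ by $(\sqrt{1-|X|^2}(a,b),X)\mapsto\big((\sqrt{1-|X|^2}a,X),(\sqrt{1-|X|^2}b,-j_+X)\big)$. Spheres $S^{m}\subset\mathbb R^{m+1}$ carry the standard boundary orientation. $\lambda_+\in\pi_{2n-1}(\widetilde Q_n)$ is the class of $a\mapsto(a,-J_+a)$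 for an orthogonal complex structure $J_+$ on $\mathbb R^{2n}$ compatible with the orientation, and $\lambda_-$ is minus the class of $a\mapsto(a,-J_-a)$ for an orthogonal complex structure $J_-$ compatible with the opposite orientation (both independent of the choice). *)

(* Defs.v *)
From HB Require Import structures.
From mathcomp Require Import all_boot all_order all_algebra.
From mathcomp Require Import all_classical all_reals all_analysis.
Set Implicit Arguments. Unset Strict Implicit. Unset Printing Implicit Defensive.
Import Order.TTheory GRing.Theory Num.Theory numFieldNormedType.Exports.
Local Open Scope classical_set_scope.
Local Open Scope ring_scope.

Section Defs.
Variable R : realType.

Definition vdot (k : nat) (a b : 'rV[R]_k) : R := \sum_(i < k) a 0 i * b 0 i.
Definition vnorm (k : nat) (a : 'rV[R]_k) : R := Num.sqrt (vdot a a).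

Definition sphere (k : nat) : set 'rV[R]_k := [set x | vnorm x = 1].

Definition Qt (k : nat) : set ('rV[R]_k * 'rV[R]_k) :=
  [set p | vnorm p.1 = 1 /\ vnorm p.2 = 1 /\ vdot p.1 p.2 = 0].

(* Linear maps act on row vectors on the right: x |-> x *m J. *)
Definition ocs (k : nat) (J : 'M[R]_k) : Prop :=
  J *m J = - 1%:M /\ J *m J^T = 1%:M.

(* J is compatible with the orientation with sign [pos]: there is an
   orthonormal basis (rows of P) of the form (e_1, J e_1, ..., e_m, J e_m)
   which is positively (resp. negatively) oriented. *)
Definition ocs_oriented (pos : bool) (k : nat) (J : 'M[R]_k) : Prop :=
  exists P : 'M[R]_k,
    P *m P^T = 1%:M /\
    (if pos then 0 < \det P else \det P < 0) /\
    (forall i j : 'I_k, ~~ odd i -> val j = i.+1 -> row j P = row i P *m J).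

Definition ocs_pos (k : nat) (J : 'M[R]_k) := ocs J /\ ocs_oriented true J.
Definition ocs_neg (k : nat) (J : 'M[R]_k) := ocs J /\ ocs_oriented false J.

Definition jplus : 'M[R]_2 :=
  \matrix_(i < 2, j < 2)
     (if (val i == 0%N) && (val j == 1%N) then 1
      else if (val i == 1%N) && (val j == 0%N) then -1 else 0).

Definition lam (k : nat) (J : 'M[R]_k) (a : 'rV[R]_k) : 'rV[R]_k * 'rV[R]_k :=
  (a, - (a *m J)).

(* reflection of R^k in the first coordinate (represents -1 in pi_{k-1}) *)
Definition refl (k : nat) (x : 'rV[R]_k) : 'rV[R]_k :=
  \row_i (if val i == 0%N then - x 0 i else x 0 i).

(* double suspension of f : S^{m-1} -> R^p (+) R^p, as a map
   S^{m+1} subset R^m (+) R^2 -> (R^p (+) R^p) (+) R^2: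
   (sqrt(1-|X|^2) u, X) |-> (sqrt(1-|X|^2) f(u), X) *)
Definition susp2 (m p : nat) (f : 'rV[R]_m -> 'rV[R]_p * 'rV[R]_p)
  (y : 'rV[R]_(m + 2)) : ('rV[R]_p * 'rV[R]_p) * 'rV[R]_2 :=
  let v := lsubmx y in
  let X := rsubmx y in
  let s := vnorm v in
  (if s == 0 then (0, 0)
   else (s *: (f (s^-1 *: v)).1, s *: (f (s^-1 *: v)).2), X).

Definition iotaQ (p : nat) (w : ('rV[R]_p * 'rV[R]_p) * 'rV[R]_2)
  : 'rV[R]_(p + 2) * 'rV[R]_(p + 2) :=
  (row_mx w.1.1 w.2, row_mx w.1.2 (- (w.2 *m jplus))).

Definition homotopic (m : nat) (Y : topologicalType) (A : set 'rV[R]_m)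
  (B : set Y) (f g : 'rV[R]_m -> Y) : Prop :=
  exists H : R * 'rV[R]_m -> Y,
    {within [set t : R | 0 <= t <= 1] `*` A, continuous H} /\
    (forall t x, 0 <= t <= 1 -> A x -> B (H (t, x))) /\
    (forall x, A x -> H (0, x) = f x) /\
    (forall x, A x -> H (1, x) = g x).

End Defs.

(* Main.v *)
Require Import Defs.
From HB Require Import structures.
From mathcomp Require Import all_boot all_order all_algebra.
From mathcomp Require Import all_classical all_reals all_analysis.
From mathcomp Require Import ring lra zify.
Import Order.TTheory GRing.Theory Num.Theory numFieldNormedType.Exports.
Local Open Scope classical_set_scope.
Local Open Scope ring_scope.
Set Implicit Arguments. Unset Strict Implicit. Unset Printing Implicit Defensive.

Section Cont.
Variable R : realType.
Variable T : topologicalType.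
Implicit Types f g : T -> R.

Lemma c_add f g : continuous f -> continuous g -> continuous (fun t => f t + g t).
Proof. by move=> hf hg x; apply: cvgD; [exact: hf|exact: hg]. Qed.
Lemma c_mul f g : continuous f -> continuous g -> continuous (fun t => f t * g t).
Proof. by move=> hf hg x; apply: cvgM; [exact: hf|exact: hg]. Qed.
Lemma c_opp f : continuous f -> continuous (fun t => - f t).
Proof. by move=> hf x; apply: cvgN; exact: hf. Qed.
Lemma c_cst (a : R) : continuous (fun _ : T => a).
Proof. by move=> x; apply: cvg_cst. Qed.
Lemma c_inv f : continuous f -> (forall t, f t != 0) -> continuous (fun t => (f t)^-1).
Proof. by move=> hf h0 x; apply: cvgV; [exact: h0|exact: hf]. Qed.
Lemma c_sum n (F : 'I_n -> T -> R) : (forall i, continuous (F i)) ->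
  continuous (fun t => \sum_(i < n) F i t).
Proof.
move=> hF; elim: (index_enum _) => [|a r IH].
  by under eq_fun do rewrite big_nil; apply: c_cst.
by under eq_fun do rewrite big_cons; apply: c_add.
Qed.

Definition ctm m n (F : T -> 'M[R]_(m, n)) := forall i j, continuous (fun t => F t i j).

Lemma ctm_cont m n (F : T -> 'M[R]_(m, n)) : ctm F -> continuous F.
Proof.
move=> hF x; apply/cvgrPdist_le => /= e e0.
near=> y.
rewrite [leLHS]/Num.Def.normr/= mx_normrE (bigmax_le _ (ltW e0))//= => ij _.
rewrite !mxE/=.
move: ij; near: y; apply: filter_forall => /= ij.
have := hF ij.1 ij.2 x => /cvgrPdist_le /(_ e e0).
done.
Unshelve. all: by end_near. Qed.

Lemma cont_ctm m n (F : T -> 'M[R]_(m, n)) : continuous F -> ctm F.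
Proof.
move=> hF i j x; apply: (@continuous_comp _ _ _ F (fun M : 'M[R]_(m, n) => M i j)).
  exact: hF.
exact: coord_continuous.
Qed.

Lemma ctm_mul m n p (F : T -> 'M[R]_(m, n)) (G : T -> 'M[R]_(n, p)) :
  ctm F -> ctm G -> ctm (fun t => F t *m G t).
Proof.
move=> hF hG i j; under eq_fun do rewrite mxE.
by apply: c_sum => l; apply: c_mul.
Qed.

Lemma ctm_add m n (F G : T -> 'M[R]_(m, n)) : ctm F -> ctm G -> ctm (fun t => F t + G t).
Proof. by move=> hF hG i j; under eq_fun do rewrite mxE; apply: c_add. Qed.

Lemma ctm_opp m n (F : T -> 'M[R]_(m, n)) : ctm F -> ctm (fun t => - F t).
Proof. by move=> hF i j; under eq_fun do rewrite mxE; apply: c_opp. Qed.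

Lemma ctm_scale m n (a : T -> R) (F : T -> 'M[R]_(m, n)) :
  continuous a -> ctm F -> ctm (fun t => a t *: F t).
Proof. by move=> ha hF i j; under eq_fun do rewrite mxE; apply: c_mul. Qed.

Lemma ctm_cst m n (M : 'M[R]_(m, n)) : ctm (fun _ => M).
Proof. by move=> i j; apply: c_cst. Qed.

Lemma ctm_tr m n (F : T -> 'M[R]_(m, n)) : ctm F -> ctm (fun t => (F t)^T).
Proof. by move=> hF i j; under eq_fun do rewrite mxE; apply: hF. Qed.

End Cont.

Section Alg.
Variable R : realType.
Variable k : nat.
Implicit Types (u v w x y : 'rV[R]_k) (M N : 'M[R]_k).

Lemma vdotE u v : vdot u v = (u *m v^T) 0 0.
Proof. by rewrite /vdot !mxE; apply: eq_bigr => i _; rewrite !mxE. Qed.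

Lemma vdotC u v : vdot u v = vdot v u.
Proof. by rewrite /vdot; apply: eq_bigr => i _; rewrite mulrC. Qed.

Lemma det_rank1 u w : \det (1%:M + u^T *m w) = 1 + (w *m u^T) 0 0.
Proof.
have E1 : block_mx (1%:M : 'M[R]_k) (- u^T) w (1%:M : 'M[R]_1) =
  block_mx 1%:M 0 w 1%:M *m block_mx 1%:M (- u^T) 0 (1%:M + w *m u^T).
  rewrite mulmx_block; congr block_mx.
  - by rewrite !mul1mx mul0mx addr0.
  - by rewrite mul1mx mul0mx addr0.
  - by rewrite mulmx1 mulmx0 addr0.
  - by rewrite mulmxN mul1mx addrCA addNr addr0.
have E2 : block_mx (1%:M : 'M[R]_k) (- u^T) w (1%:M : 'M[R]_1) =
  block_mx (1%:M + u^T *m w) (- u^T) 0 1%:M *m block_mx 1%:M 0 w 1%:M.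
  rewrite mulmx_block; congr block_mx.
  - by rewrite mulmx1 mulNmx addrK.
  - by rewrite mulmx0 mulmx1 add0r.
  - by rewrite mul0mx mul1mx add0r.
  - by rewrite mul0mx mul1mx add0r.
have H := congr1 (fun M : 'M[R]_(k + 1) => \det M) E1.
rewrite E2 /= !det_mulmx det_lblock det_ublock in H.
rewrite !det1 !mul1r !mulr1 in H; rewrite H det_ublock det1 mul1r det_mx11.
by rewrite !mxE.
Qed.


Lemma vdotDl u v w : vdot (u + v) w = vdot u w + vdot v w.
Proof. by rewrite /vdot -big_split; apply: eq_bigr => i _; rewrite !mxE mulrDl. Qed.
Lemma vdotZl (a : R) u w : vdot (a *: u) w = a * vdot u w.
Proof. by rewrite /vdot mulr_sumr; apply: eq_bigr => i _; rewrite !mxE mulrA. Qed.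
Lemma vdotNl u w : vdot (- u) w = - vdot u w.
Proof. by rewrite -scaleN1r vdotZl mulN1r. Qed.
Lemma vdotBl u v w : vdot (u - v) w = vdot u w - vdot v w.
Proof. by rewrite vdotDl vdotNl. Qed.
Lemma vdotDr u v w : vdot w (u + v) = vdot w u + vdot w v.
Proof. by rewrite !(vdotC w) vdotDl. Qed.
Lemma vdotZr (a : R) u w : vdot w (a *: u) = a * vdot w u.
Proof. by rewrite !(vdotC w) vdotZl. Qed.
Lemma vdotNr u w : vdot w (- u) = - vdot w u.
Proof. by rewrite !(vdotC w) vdotNl. Qed.
Lemma vdotBr u v w : vdot w (u - v) = vdot w u - vdot w v.
Proof. by rewrite !(vdotC w) vdotBl. Qed.
Lemma vdot_ge0 u : 0 <= vdot u u.
Proof. by rewrite /vdot; apply: sumr_ge0 => i _; rewrite -expr2 sqr_ge0. Qed.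
Lemma vdot_eq0 u : vdot u u = 0 -> u = 0.
Proof.
move=> /eqP; rewrite /vdot psumr_eq0; last by move=> i _; rewrite -expr2 sqr_ge0.
move=> /allP H; apply/rowP => i; rewrite !mxE.
by have := H i (mem_index_enum _); rewrite /= mulf_eq0 orbb => /eqP.
Qed.
Lemma mulTr x w : x *m w^T = (vdot x w)%:M.
Proof. by rewrite vdotE -mx11_scalar. Qed.

Definition Hm w : 'M[R]_k := 1%:M - (2 / vdot w w) *: (w^T *m w).

Lemma Hm_act x w : x *m Hm w = x - (2 / vdot w w * vdot x w) *: w.
Proof.
by rewrite /Hm mulmxBr mulmx1 -scalemxAr mulmxA mulTr mul_scalar_mx scalerA.
Qed.

Lemma Hm_tr w : (Hm w)^T = Hm w.
Proof. by rewrite /Hm linearB /= trmx1 linearZ /= trmx_mul trmxK. Qed.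

Lemma Hm_sq w : vdot w w != 0 -> Hm w *m Hm w = 1%:M.
Proof.
move=> d0; apply/row_matrixP => i; rewrite row_mul rowE row1 !Hm_act.
set e := delta_mx 0 i; set c := 2 / vdot w w.
rewrite vdotBl vdotZl.
have h : c * vdot e w + c * (vdot e w - c * vdot e w * vdot w w) = 0.
  by rewrite /c; field.
by rewrite -addrA -opprD -scalerDl h scale0r subr0.
Qed.

Lemma Hm_orth w : vdot w w != 0 -> Hm w *m (Hm w)^T = 1%:M.
Proof. by move=> d0; rewrite Hm_tr Hm_sq. Qed.

Lemma Hm_det w : vdot w w != 0 -> \det (Hm w) = -1.
Proof.
move=> d0; have -> : Hm w = 1%:M + (- (2 / vdot w w) *: w)^T *m w.
  by rewrite /Hm [(_ *: w)^T]linearZ /= -scalemxAl scaleNr.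
rewrite det_rank1 mulTr mxE eqxx mulr1n vdotZr mulNr divfK //.
by ring.
Qed.

Lemma Hm_fix x w : vdot x w = 0 -> x *m Hm w = x.
Proof. by move=> h; rewrite Hm_act h mulr0 scale0r subr0. Qed.

Lemma Hm_scale (a : R) w : a != 0 -> Hm (a *: w) = Hm w.
Proof.
move=> a0; rewrite /Hm vdotZl vdotZr [(_ *: w)^T]linearZ /= -scalemxAl -scalemxAr !scalerA.
congr (_ - _); congr (_ *: _); have [->|d0] := eqVneq (vdot w w) 0.
  by rewrite !(mulr0, invr0, mul0r).
by field; apply/andP; split.
Qed.

Lemma Hm_swap r e : vdot r r = 1 -> vdot e e = 1 -> vdot (r - e) (r - e) != 0 ->
  r *m Hm (r - e) = e.
Proof.
move=> hr he d0; rewrite Hm_act.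
have hd : vdot (r - e) (r - e) = 2 * vdot r (r - e).
  rewrite !vdotBl !vdotBr hr he (vdotC e r); ring.
have hc : 2 / vdot (r - e) (r - e) * vdot r (r - e) = 1.
  rewrite hd; field; apply/eqP => h; move: d0; by rewrite hd h mulr0 eqxx.
by rewrite hc scale1r opprB addrC subrK.
Qed.


Definition orth M := M *m M^T = 1%:M.

Lemma orth_rows M : orth M -> forall i j, vdot (row i M) (row j M) = (i == j)%:R.
Proof.
move=> oM i j; have := congr1 (fun N : 'M[R]_k => N i j) oM; rewrite !mxE => <-.
by apply: eq_bigr => l _; rewrite !mxE.
Qed.

Lemma orthT M : orth M -> M^T *m M = 1%:M.
Proof. by move/mulmx1C. Qed.

Lemma orth_mul M N : orth M -> orth N -> orth (M *m N).
Proof.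
by move=> oM oN; rewrite /orth trmx_mul mulmxA -(mulmxA M) oN mulmx1 oM.
Qed.

Lemma orth1 : orth 1%:M.
Proof. by rewrite /orth trmx1 mulmx1. Qed.

Lemma vdot_delta (i j : 'I_k) : vdot (delta_mx 0 i : 'rV[R]_k) (delta_mx 0 j) = (i == j)%:R.
Proof. by rewrite -!(@row1 R) (orth_rows orth1). Qed.

Definition prodH (s : seq 'rV[R]_k) : 'M[R]_k := foldr (fun w M => Hm w *m M) 1%:M s.

Lemma prodH_rcons s u : prodH (rcons s u) = prodH s *m Hm u.
Proof.
elim: s => [|a s IH] /=; first by rewrite mul1mx mulmx1.
by rewrite IH mulmxA.
Qed.

Lemma prodH_det s : (forall w, w \in s -> vdot w w = 1) ->
  \det (prodH s) = (-1) ^+ size s.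
Proof.
elim: s => [|a s IH] hs /=; first by rewrite det1 expr0.
rewrite det_mulmx Hm_det ?IH ?exprS //.
  by move=> w ws; apply: hs; rewrite inE ws orbT.
by rewrite hs ?inE ?eqxx // oner_eq0.
Qed.

Lemma dec_aux m : forall P, orth P ->
  (forall i : 'I_k, (m <= i)%N -> row i P = delta_mx 0 i) ->
  exists s, (forall w, w \in s -> vdot w w = 1) /\ P = prodH s.
Proof.
elim: m => [|m IH] P oP hP.
  exists [::]; split => //=; apply/row_matrixP => i; by rewrite hP // row1.
case: (ltnP m k) => mk; last first.
  apply: IH => // i mi; exfalso; have := ltn_ord i.
  by rewrite ltnNge (leq_trans mk mi).
pose j := Ordinal mk.
pose r := row j P; pose e : 'rV[R]_k := delta_mx 0 j.
have rr : vdot r r = 1 by rewrite (orth_rows oP) eqxx.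
have ee : vdot e e = 1 by rewrite vdot_delta eqxx.
have [re | rne] := eqVneq r e.
  apply: IH => // i mi; case: (ltnP m i) => [mi'|im]; first exact: hP.
  have -> : i = j by apply/val_inj => /=; apply/eqP; rewrite eqn_leq mi im.
  exact: re.
pose d := vdot (r - e) (r - e).
have d0 : d != 0.
  apply/eqP => /vdot_eq0 /eqP; rewrite subr_eq0; exact/negP.
have dge : 0 <= d by apply: vdot_ge0.
pose sq := Num.sqrt d.
have sq0 : sq != 0 by rewrite sqrtr_eq0 -ltNge lt_def d0.
pose u := sq^-1 *: (r - e).
have uu : vdot u u = 1.
  rewrite /u vdotZl vdotZr mulrA -invfM -expr2 sqr_sqrtr // -/d mulVf //.
have Hu : Hm u = Hm (r - e) by apply: Hm_scale; rewrite invr_eq0.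
pose P' := P *m Hm u.
have oP' : orth P' by apply: orth_mul => //; apply: Hm_orth; rewrite uu oner_eq0.
have [s [hs Es]] : exists s, (forall w, w \in s -> vdot w w = 1) /\ P' = prodH s.
  apply: IH => // i mi; rewrite /P' row_mul.
  case: (ltnP m i) => [mi'|im].
    rewrite hP // Hm_fix //; rewrite /u vdotZr vdotBr -(hP i mi') (orth_rows oP).
    have ij : (i == j) = false.
      by apply/negbTE/eqP => ij; move: mi'; rewrite ij /= ltnn.
    by rewrite ij (hP i mi') vdot_delta ij subrr mulr0.
  have -> : i = j by apply/val_inj => /=; apply/eqP; rewrite eqn_leq mi im.
  by rewrite Hu Hm_swap.
exists (rcons s u); split.
  by move=> w; rewrite mem_rcons inE => /orP [/eqP -> // | /hs].
rewrite prodH_rcons -Es /P' -mulmxA Hm_sq ?mulmx1 //.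
by rewrite uu oner_eq0.
Qed.

Lemma dec P : orth P -> exists s, (forall w, w \in s -> vdot w w = 1) /\ P = prodH s.
Proof.
move=> oP; apply: (dec_aux (m := k)) => // i; have := ltn_ord i.
by rewrite ltnNge => /negbTE ->.
Qed.


Definition sgn u v : 'rV[R]_k := if 0 <= vdot u v then v else - v.
Definition wt u v (t : R) : 'rV[R]_k := (1 - t) *: u + t *: sgn u v.

Fixpoint pathM (s : seq 'rV[R]_k) (t : R) : 'M[R]_k :=
  match s with
  | u :: (v :: s') => Hm u *m Hm (wt u v t) *m pathM s' t
  | [:: u] => Hm u
  | [::] => 1%:M
  end.

Lemma sgn_prop u v : vdot v v = 1 ->
  [/\ vdot (sgn u v) (sgn u v) = 1, 0 <= vdot u (sgn u v) & Hm (sgn u v) = Hm v].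
Proof.
rewrite /sgn; case: ifP => h vv; first by split.
split.
- by rewrite vdotNl vdotNr opprK.
- by rewrite vdotNr oppr_ge0 ltW // ltNge h.
- by rewrite -scaleN1r Hm_scale // oppr_eq0 oner_eq0.
Qed.

Lemma wt_ge u v t : vdot u u = 1 -> vdot v v = 1 -> 1/2 <= vdot (wt u v t) (wt u v t).
Proof.
move=> uu vv; have [h1 h2 _] := sgn_prop u vv.
have h3 := vdot_ge0 (u - sgn u v).
rewrite !vdotBl !vdotBr uu h1 (vdotC (sgn u v) u) in h3.
rewrite /wt !vdotDl !vdotDr !vdotZl !vdotZr uu h1 (vdotC (sgn u v) u).
move: h2 h3; set c := vdot u (sgn u v) => h2 h3.
have e : (1 - t) * ((1 - t) * 1) + (1 - t) * (t * c) + (t * ((1 - t) * c) + t * (t * 1))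
   = 1 - 2 * (t * (1 - t)) * (1 - c) by ring.
rewrite e; have hc : 0 <= 1 - c <= 1 by apply/andP; split; lra.
have hp : t * (1 - t) <= 1/4.
  have := sqr_ge0 (t - 1/2); rewrite expr2 => hh; lra.
move: hp hc; set p := t * (1 - t); set q := 1 - c => hp /andP [hq1 hq2].
have [ht|ht] := leP 0 p.
  have : p * q <= 1/4 by nra.
  lra.
nra.
Qed.

Lemma wt_ne0 u v t : vdot u u = 1 -> vdot v v = 1 -> vdot (wt u v t) (wt u v t) != 0.
Proof. by move=> uu vv; have := wt_ge t uu vv; apply: contraTneq => ->; lra. Qed.

Lemma pathM_ind (P : seq 'rV[R]_k -> Prop) :
  P [::] -> (forall u, P [:: u]) -> (forall u v s, P s -> P [:: u, v & s]) ->
  forall s, P s.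
Proof.
move=> h0 h1 h2 s; have [n] := ubnP (size s); elim: n s => [|n IH] [|u [|v s]] //=.
by move=> hs; apply: h2; apply: IH; rewrite -ltnS ltnW.
Qed.

Definition unitseq (s : seq 'rV[R]_k) := forall w, w \in s -> vdot w w = 1.

Lemma unitseq_cons2 u v s : unitseq [:: u, v & s] ->
  [/\ vdot u u = 1, vdot v v = 1 & unitseq s].
Proof.
move=> h; split; first by apply: h; rewrite inE eqxx.
  by apply: h; rewrite !inE eqxx orbT.
by move=> w ws; apply: h; rewrite !inE ws !orbT.
Qed.

Lemma pathM1 s : unitseq s -> pathM s 1 = prodH s.
Proof.
elim/pathM_ind: s => [|u|u v s IH] hs //=; first by rewrite mulmx1.
have [uu vv hs'] := unitseq_cons2 hs.
have [_ _ hv] := sgn_prop u vv.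
by rewrite IH // /wt subrr scale0r add0r scale1r hv mulmxA.
Qed.

Lemma pathM0 s : unitseq s -> ~~ odd (size s) -> pathM s 0 = 1%:M.
Proof.
elim/pathM_ind: s => [|u|u v s IH] hs //= ho.
have [uu vv hs'] := unitseq_cons2 hs.
rewrite IH //; last by move: ho; rewrite negbK.
by rewrite /wt subr0 scale1r scale0r addr0 Hm_sq ?mulmx1 // uu oner_eq0.
Qed.

Lemma pathM_orth s t : unitseq s -> orth (pathM s t).
Proof.
elim/pathM_ind: s => [|u|u v s IH] hs /=; first exact: orth1.
  by apply: Hm_orth; rewrite hs ?inE ?eqxx ?oner_eq0.
have [uu vv hs'] := unitseq_cons2 hs.
apply: orth_mul; last exact: IH.
apply: orth_mul; apply: Hm_orth; first by rewrite uu oner_eq0.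
exact: wt_ne0.
Qed.

End Alg.

Section Htpy.
Variable R : realType.
Variable k : nat.

Lemma ctm_Hm (T : topologicalType) (w : T -> 'rV[R]_k) : ctm w ->
  (forall t, vdot (w t) (w t) != 0) -> ctm (fun t => Hm (w t)).
Proof.
move=> hw h0; rewrite /Hm; apply: ctm_add; first exact: ctm_cst.
apply: ctm_opp; apply: ctm_scale; last by apply: ctm_mul => //; apply: ctm_tr.
apply: c_mul; first exact: c_cst.
apply: c_inv => //.
under eq_fun do rewrite vdotE.
by apply: (ctm_mul hw (ctm_tr hw)).
Qed.

Lemma ctm_pathM (T : topologicalType) (a : T -> R) (s : seq 'rV[R]_k) : continuous a -> unitseq s ->
  ctm (fun p => pathM s (a p)).
Proof.
move=> ha; elim/pathM_ind: s => [|u|u v s IH] hs /=.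
- exact: ctm_cst.
- exact: ctm_cst.
have [uu vv hs'] := unitseq_cons2 hs.
apply: ctm_mul; last exact: IH.
apply: ctm_mul; first exact: ctm_cst.
apply: ctm_Hm; last by move=> t; apply: wt_ne0.
rewrite /wt; apply: ctm_add; apply: ctm_scale; try exact: ctm_cst; last exact: ha.
by apply: c_add; [exact: c_cst | exact: c_opp].
Qed.

Lemma vnorm1 (y : 'rV[R]_k) : vnorm y = 1 <-> vdot y y = 1.
Proof.
split => h; last by rewrite /vnorm h sqrtr1.
by have := sqr_sqrtr (vdot_ge0 y); rewrite -/(vnorm y) h expr1n.
Qed.

Lemma lam_Qt (M : 'M[R]_k) y : M^T = - M -> orth M -> vnorm y = 1 -> Qt (lam M y).
Proof.
move=> hT oM /vnorm1 hy; rewrite /Qt /lam /=; split; first exact/vnorm1.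
split.
  apply/vnorm1; rewrite vdotNl vdotNr opprK vdotE trmx_mul mulmxA -(mulmxA y) oM.
  by rewrite mulmx1 -vdotE.
rewrite vdotNr vdotE trmx_mul mulmxA hT mulmxN mulNmx mxE.
set a := ((y *m M) *m y^T) 0 0.
have : a = ((y *m M) *m y^T)^T 0 0 by rewrite mxE.
rewrite trmx_mul trmxK trmx_mul hT mulNmx mulmxN mulmxA mxE -/a => ha.
lra.
Qed.

Lemma homot (J1 Q : 'M[R]_k) (g : 'rV[R]_k -> 'rV[R]_k) :
  J1^T = - J1 -> orth J1 -> orth Q -> 0 < \det Q -> continuous g ->
  (forall x, sphere x -> sphere (g x)) ->
  homotopic (@sphere R k) (@Qt R k) (fun y => lam J1 (g y))
    (fun y => lam (Q^T *m J1 *m Q) (g y)).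
Proof.
move=> hT oJ oQ dQ hg hsph.
have [s [hs EQ]] := dec oQ.
have ev : ~~ odd (size s).
  apply/negP => od; move: dQ; rewrite EQ prodH_det // -signr_odd od expr1.
  by rewrite ltr0N1.
pose M t := (pathM s t)^T *m J1 *m pathM s t.
exists (fun p => lam (M p.1) (g p.2)); split; last split; last split.
- apply: continuous_subspaceT.
  have hg2 : continuous (fun p : R * 'rV[R]_k => g p.2).
    move=> p; apply: continuous_comp; last exact: hg.
    exact: cvg_snd.
  have hf : continuous (fun p : R * 'rV[R]_k => p.1) by move=> p; exact: cvg_fst.
  have h2 : continuous (fun p : R * 'rV[R]_k => - (g p.2 *m M p.1)).
    apply: ctm_cont; apply: ctm_opp; apply: ctm_mul; first exact: cont_ctm.
    rewrite /M; apply: ctm_mul; last exact: ctm_pathM.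
    by apply: ctm_mul; [apply: ctm_tr; exact: ctm_pathM | exact: ctm_cst].
  move=> p; rewrite /lam.
  exact: (cvg_pair (hg2 p) (h2 p)).
- move=> t x _ sx; apply: lam_Qt; last exact: hsph.
    by rewrite /M !trmx_mul trmxK hT mulNmx mulmxN mulmxA.
  apply: orth_mul; last exact: pathM_orth.
  apply: orth_mul => //; rewrite /orth trmxK; apply: orthT; exact: pathM_orth.
- by move=> x _; rewrite /M /= pathM0 // trmx1 mul1mx mulmx1.
- by move=> x _; rewrite /M /= pathM1 // -EQ.
Qed.

End Htpy.

Section Ocs.
Variable R : realType.
Variable k : nat.

Definition J0 : 'M[R]_k := \matrix_(i, j)
  (if odd j && (i.+1 == j :> nat) then 1 else if odd i && (j.+1 == i :> nat) then -1 else 0).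

Lemma ocs_prop (J : 'M[R]_k) : ocs J -> J^T = - J /\ orth J.
Proof.
move=> [h1 h2]; split => //.
have h3 := mulmx1C h2.
by rewrite -[J^T]mulmx1 -[1%:M]opprK -h1 mulmxN mulmxA h3 mul1mx.
Qed.

Lemma ocs_rep (pos : bool) (J : 'M[R]_k) : ~~ odd k -> ocs J -> ocs_oriented pos J ->
  exists P : 'M[R]_k, orth P /\ (if pos then 0 < \det P else \det P < 0) /\
    J = P^T *m J0 *m P.
Proof.
move=> ek [hJ1 hJ2] [P [oP [dP hr]]]; exists P; split => //; split => //.
suff E : P *m J = J0 *m P by rewrite -mulmxA -E mulmxA (orthT oP) mul1mx.
apply/row_matrixP => i; rewrite !row_mul.
have [oi|ei] := boolP (odd i).
  have i0 : (0 < i)%N by case: (nat_of_ord i) oi.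
  have i'k : (i.-1 < k)%N by rewrite (leq_trans _ (ltn_ord i)) // prednK // ltnSn.
  pose i' := Ordinal i'k.
  have ei' : ~~ odd i' by rewrite /= -oddS prednK.
  have -> : row i P = row i' P *m J by apply: hr => //=; rewrite prednK.
  rewrite -mulmxA hJ1 mulmxN mulmx1.
  have -> : row i J0 = - delta_mx 0 i'.
    apply/rowP => l; rewrite !mxE /= oi.
    have [li|li] := eqVneq (l.+1) (nat_of_ord i).
      have -> : l == i' by apply/eqP/val_inj => /=; rewrite -li.
      have -> : (i.+1 == l :> nat) = false by apply/negbTE/eqP; lia.
      by rewrite andbF.
    have -> : (l == i') = false.
      by apply/negbTE; apply: contra_neq li => ->; rewrite /= prednK.
    rewrite andbF /=; case: ifP => [/andP [ol /eqP h]|_]; last by rewrite mulr0n oppr0.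
    by move: ol; rewrite -h /= oi.
  by rewrite mulNmx -rowE.
have ik : (i.+1 < k)%N.
  have := ltn_ord i; rewrite leq_eqVlt => /orP [/eqP h|//].
  have : odd k by rewrite -h /= ei.
  by rewrite (negbTE ek).
pose j := Ordinal ik.
rewrite -(hr i j) //.
have -> : row i J0 = delta_mx 0 j.
  apply/rowP => l; rewrite !mxE /= (negbTE ei) /=.
  have [li|li] := eqVneq (nat_of_ord i).+1 l.
    have -> : l == j by apply/eqP/val_inj => /=; rewrite -li.
    by rewrite -li /= ei.
  have -> : (l == j) = false.
    by apply/negbTE; apply: contra_neq li => ->.
  by rewrite andbF.
by rewrite -rowE.
Qed.

End Ocs.

Section Blocks.
Variable R : realType.

Lemma jplus_ocs : ocs (jplus R).
Proof.
split; apply/matrixP => i j; rewrite !mxE !big_ord_recl big_ord0 !mxE;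
  case: i => [[|[|i]] hi]; case: j => [[|[|j]] hj] //=; rewrite ?mxE /=;
  try lra.
Qed.

Lemma ocs_block m p (A : 'M[R]_m) (B : 'M[R]_p) : ocs A -> ocs B ->
  ocs (block_mx A 0 0 B).
Proof.
move=> [a1 a2] [b1 b2]; split.
  rewrite mulmx_block !mulmx0 !mul0mx !addr0 !add0r a1 b1.
  by rewrite (scalar_mx_block m p (1 : R)) opp_block_mx !oppr0.
rewrite tr_block_mx !trmx0 mulmx_block !mulmx0 !mul0mx !addr0 !add0r a2 b2.
by rewrite scalar_mx_block.
Qed.

Lemma orth_block m (P : 'M[R]_m) : orth P -> orth (block_mx P 0 0 (1%:M : 'M[R]_2)).
Proof.
move=> oP; rewrite /orth tr_block_mx !trmx0 trmx1 mulmx_block !mulmx0 !mul0mx.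
by rewrite !addr0 !add0r oP mulmx1 scalar_mx_block.
Qed.

Lemma J0_block n : J0 R (2 * n + 2)%N = block_mx (J0 R (2 * n)%N) 0 0 (jplus R).
Proof.
apply/matrixP => i j.
case: (split_ordP i) => i' ->; case: (split_ordP j) => j' ->.
- by rewrite block_mxEul !mxE.
- rewrite block_mxEur !mxE /=.
  have h1 : ((2 * n + j').+1 == i' :> nat) = false.
    by apply/negbTE/eqP => h; have := ltn_ord i'; lia.
  rewrite h1 !andbF.
  have h2 : (i'.+1 == 2 * n + j' :> nat) = (j' == 0 :> nat) && (i'.+1 == 2 * n)%N.
    apply/eqP/andP => [h|[/eqP h3 /eqP h4]]; last by lia.
    by have := ltn_ord i'; split; apply/eqP; lia.
  rewrite h2 oddD oddM /=.
  by case: (nat_of_ord j') => [|[|?]] //=; rewrite andbF.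
- rewrite block_mxEdl !mxE /=.
  have h1 : ((2 * n + i').+1 == j' :> nat) = false.
    by apply/negbTE/eqP => h; have := ltn_ord j'; lia.
  rewrite h1 !andbF.
  have h2 : (j'.+1 == 2 * n + i' :> nat) = (i' == 0 :> nat) && (j'.+1 == 2 * n)%N.
    apply/eqP/andP => [h|[/eqP h3 /eqP h4]]; last by lia.
    by have := ltn_ord j'; split; apply/eqP; lia.
  rewrite h2 oddD oddM /=.
  by case: (nat_of_ord i') => [|[|?]] //=; rewrite andbF.
- rewrite block_mxEdr !mxE /= !oddD !addKb /=.
  have e1 : forall a b : nat, ((2 * n + a).+1 == 2 * n + b) = (a.+1 == b).
    by move=> a b; apply/eqP/eqP; lia.
  rewrite !e1.
  by case: i' => [[|[|a]] ha]; case: j' => [[|[|b]] hb].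
Qed.

End Blocks.

Section Final.
Variable R : realType.

Lemma vnorm0 k (v : 'rV[R]_k) : vnorm v = 0 -> v = 0.
Proof.
move=> h; apply: vdot_eq0.
by have := sqr_sqrtr (vdot_ge0 v); rewrite -/(vnorm v) h expr0n.
Qed.

Lemma refl_scale k (c : R) (a : 'rV[R]_k) : refl (c *: a) = c *: refl a.
Proof. by apply/rowP => i; rewrite !mxE; case: ifP => _; rewrite ?mxE // mulrN. Qed.

Lemma refl0 k : refl (0 : 'rV[R]_k) = 0.
Proof. by apply/rowP => i; rewrite !mxE; case: ifP; rewrite ?oppr0. Qed.

Lemma susp2_lam m (J : 'M[R]_m) (y : 'rV[R]_(m + 2)) :
  susp2 (lam J) y = ((lsubmx y, - (lsubmx y *m J)), rsubmx y).
Proof.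
rewrite /susp2 /lam /=; case: eqP => [/vnorm0 -> | s0].
  by rewrite mul0mx oppr0.
by rewrite scalerA mulfV ?scale1r -?scalemxAl ?scalerN ?scalerA ?mulfV ?scale1r //;
  apply/eqP.
Qed.

Lemma susp2_lamrefl m (J : 'M[R]_m) (y : 'rV[R]_(m + 2)) :
  susp2 (fun a => lam J (refl a)) y =
  ((refl (lsubmx y), - (refl (lsubmx y) *m J)), rsubmx y).
Proof.
rewrite /susp2 /lam /=; case: eqP => [/vnorm0 -> | s0].
  by rewrite refl0 mul0mx oppr0.
rewrite !refl_scale scalerA mulfV ?scale1r -?scalemxAl ?scalerN ?scalerA ?mulfV ?scale1r //;
  by apply/eqP.
Qed.

Lemma iota_eq m (J : 'M[R]_m) (v : 'rV[R]_m) (X : 'rV[R]_2) :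
  iotaQ ((v, - (v *m J)), X) = lam (block_mx J 0 0 (jplus R)) (row_mx v X).
Proof.
rewrite /iotaQ /lam /= mul_row_block !mulmx0 !addr0 !add0r.
by rewrite opp_row_mx.
Qed.

Lemma refl_row m (a : 'rV[R]_m) (b : 'rV[R]_2) : (0 < m)%N ->
  refl (row_mx a b) = row_mx (refl a) b.
Proof.
move=> m0; apply/rowP => i; rewrite !mxE.
case: (split_ordP i) => j -> /=.
  by rewrite mxE.
case: ifP => // /eqP h; lia.
Qed.

Lemma key (pos : bool) m (J : 'M[R]_m) (J' : 'M[R]_(m + 2)) (g : 'rV[R]_(m + 2) -> 'rV[R]_(m + 2)) :
  ~~ odd m -> 
  ocs J -> ocs_oriented pos J -> ocs J' -> ocs_oriented pos J' ->
  J0 R (m + 2) = block_mx (J0 R m) 0 0 (jplus R) ->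
  continuous g -> (forall x, sphere x -> sphere (g x)) ->
  homotopic (@sphere R (m + 2)) (@Qt R (m + 2))
    (fun y => lam (block_mx J 0 0 (jplus R)) (g y)) (fun y => lam J' (g y)).
Proof.
move=> em oJ oJo oJ' oJo' EJ0 hg hs.
have em2 : ~~ odd (m + 2) by rewrite oddD /= addbF.
have [P [oP [dP EP]]] := ocs_rep em oJ oJo.
have [P2 [oP2 [dP2 EP2]]] := ocs_rep em2 oJ' oJo'.
pose J1 := block_mx J 0 0 (jplus R).
pose P1 := block_mx P 0 0 (1%:M : 'M[R]_2).
have oP1 : orth P1 by apply: orth_block.
have hJ1 : J1 = P1^T *m J0 R (m + 2) *m P1.
  rewrite EJ0 /P1 tr_block_mx !trmx0 trmx1 !mulmx_block.
  rewrite !mulmx0 !mul0mx !addr0 !add0r !mul1mx !mulmx1 -EP.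
  by rewrite mul0mx.
have [aJ1 oJ1] := ocs_prop (ocs_block oJ (@jplus_ocs R)).
pose Q := P1^T *m P2.
have oQ : orth Q.
  apply: orth_mul => //; rewrite /orth trmxK; exact: orthT.
have dQ : 0 < \det Q.
  rewrite /Q det_mulmx det_tr /P1 det_ublock det1 mulr1.
  by move: dP dP2; case: (pos) => h1 h2; nra.
have := homot aJ1 oJ1 oQ dQ hg hs.
suff -> : Q^T *m J1 *m Q = J' by [].
rewrite hJ1 /Q trmx_mul trmxK !mulmxA -(mulmxA P2^T) oP1 mulmx1.
by rewrite -(mulmxA (P2^T *m J0 R (m + 2))) oP1 mulmx1 EP2.
Qed.

End Final.

Lemma refl_cont (R : realType) k : continuous (@refl R k).
Proof.
apply: ctm_cont => i j.
have -> : (fun x : 'rV[R]_k => refl x i j) =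
  (fun x => if nat_of_ord j == 0%N then - x 0 j else x 0 j).
  by apply/funext => x; rewrite mxE.
have cj : continuous (fun x : 'rV[R]_k => x 0 j).
  by apply: cont_ctm => x; apply: cvg_id.
by case: (nat_of_ord j == 0%N) => //; apply: c_opp.
Qed.

Lemma refl_sphere (R : realType) k (x : 'rV[R]_k) : sphere x -> sphere (refl x).
Proof.
rewrite /sphere /= /vnorm /vdot => <-; congr Num.sqrt; apply: eq_bigr => i _.
by rewrite !mxE; case: ifP => _; rewrite ?mulrNN.
Qed.

Lemma id_cont (R : realType) k : continuous (fun x : 'rV[R]_k => x).
Proof. by move=> x; apply: cvg_id. Qed.

Unset Implicit Arguments.

Theorem lemmaA1 (R : realType) (n : nat) (hn : (2 <= n)%N)
  (Jp Jm : 'M[R]_(2 * n)) (Jp' Jm' : 'M[R]_(2 * n + 2))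
  (hJp : ocs_pos Jp) (hJm : ocs_neg Jm)
  (hJp' : ocs_pos Jp') (hJm' : ocs_neg Jm') :
  homotopic (@sphere R (2 * n + 2)) (@Qt R (2 * n + 2))
    (fun y => iotaQ (susp2 (lam Jp) y)) (lam Jp')
  /\
  homotopic (@sphere R (2 * n + 2)) (@Qt R (2 * n + 2))
    (fun y => iotaQ (susp2 (fun a => lam Jm (refl a)) y))
    (fun y => lam Jm' (refl y)).
Proof.
have ev : ~~ odd (2 * n)%N by rewrite oddM.
have EJ0 := J0_block R n.
case: hJp => hJp1 hJp2; case: hJm => hJm1 hJm2.
case: hJp' => hJp'1 hJp'2; case: hJm' => hJm'1 hJm'2.
split.
  have -> : (fun y => iotaQ (susp2 (lam Jp) y)) =
            (fun y => lam (block_mx Jp 0 0 (jplus R)) ((fun x => x) y)).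
    by apply/funext => y; rewrite susp2_lam iota_eq hsubmxK.
  exact: (key ev hJp1 hJp2 hJp'1 hJp'2 EJ0 (@id_cont R _) (fun x h => h)).
have -> : (fun y => iotaQ (susp2 (fun a => lam Jm (refl a)) y)) =
          (fun y => lam (block_mx Jm 0 0 (jplus R)) (refl y)).
  apply/funext => y; rewrite susp2_lamrefl iota_eq -refl_row ?hsubmxK //.
  by rewrite muln_gt0 /=; apply: leq_trans hn.
exact: (key ev hJm1 hJm2 hJm'1 hJm'2 EJ0 (@refl_cont R _) (@refl_sphere R _)).
Qed.
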